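(* Let $D$ be the private information (e.g. a data mini-batch) taking values in a measurable space $\mathcal{S}$ with base measure $\mu$, with true prior density $f_D$, and let $W$ be the released information taking values in $\mathcal{W}$, produced from $D$ by a protection mechanism with likelihood $f_{W|D}(\cdot\mid\cdot)$ and induced posterior density $f_{D|W}(d\mid w)$. Assume that the attacker's prior belief density $f^{\mathcal{B}}_D$ satisfies $$\frac{f^{\mathcal{B}}_D(d)}{f_D(d)}\in[e^{-\epsilon},e^{\epsilon}]\quad\text{for all } d,$$ for some $\epsilon\ge 0$. Let $\epsilon_{p,m}\ge 0$ and suppose the mechanism guarantees $\epsilon_{p,m}$-maximum Bayesian privacy, i.e. $$\frac{f_{D|W}(d\mid w)}{f_D(d)}\in[e^{-\epsilon_{p,m}},e^{\epsilon_{p,m}}]\quad\text{for all } w\in\mathcal{W},\ d.$$ Then the average Bayesian privacy leakage $\epsilon_{p,a}=\sqrt{\mathrm{JS}(F^{\mathcal{A}}\parallel F^{\mathcal{B}})}$ satisfies $$\epsilon_{p,a}\le\frac{1}{\sqrt{2}}\sqrt{(\epsilon_{p,m}+\epsilon)\left(e^{\epsilon_{p,m}+\epsilon}-1\right)}.$$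
   Context: $F^{\mathcal{B}}$ is the attacker's belief distribution about $D$ before observing the released information, with density $f^{\mathcal{B}}_D$. $F^{\mathcal{A}}$ is the attacker's belief distribution about $D$ after observing the protected released information, with density $f^{\mathcal{A}}_D(d)=\int_{\mathcal{W}} f_{D|W}(d\mid w)\,dP_W(w)$, where $P_W$ is the distribution of the released (protected) information. With $F^{\mathcal{M}}=\tfrac12(F^{\mathcal{A}}+F^{\mathcal{B}})$, the Jensen–Shannon divergence is $\mathrm{JS}(F^{\mathcal{A}}\parallel F^{\mathcal{B}})=\tfrac12[\mathrm{KL}(F^{\mathcal{A}}\parallel F^{\mathcal{M}})+\mathrm{KL}(F^{\mathcal{B}}\parallel F^{\mathcal{M}})]$. The quantity $\epsilon_{p,a}$ is called the average Bayesian privacy (ABP) leakage. *)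

(* Defs.v *)
From HB Require Import structures.
From mathcomp Require Import all_boot all_order all_algebra.
From mathcomp Require Import all_classical all_reals all_analysis.
Set Implicit Arguments. Unset Strict Implicit. Unset Printing Implicit Defensive.
Import Order.TTheory GRing.Theory Num.Theory.
Import numFieldNormedType.Exports.
Local Open Scope classical_set_scope.
Local Open Scope ring_scope.

Section Defs.
Context (dS : measure_display) (S : measurableType dS) (R : realType).

Definition is_density (mu : {measure set S -> \bar R}) (f : S -> R) : Prop :=
  [/\ measurable_fun setT f, (forall x, 0 <= f x) &
      (\int[mu]_x (f x)%:E = 1)%E].

(* Kullback-Leibler divergence KL(F || G) of the distributions with
   densities f, g w.r.t. mu (convention 0 * ln 0 = 0) *)
Definition KL (mu : {measure set S -> \bar R}) (f g : S -> R) : \bar R :=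
  (\int[mu]_x (f x * ln (f x / g x))%:E)%E.

Definition JS (mu : {measure set S -> \bar R}) (f g : S -> R) : \bar R :=
  let m := fun x => (f x + g x) / 2 in
  ((2^-1)%:E * (KL mu f m + KL mu g m))%E.

Definition ABP_leakage (mu : {measure set S -> \bar R}) (fA fB : S -> R) : R :=
  Num.sqrt (fine (JS mu fA fB)).
End Defs.

(* attacker's posterior belief density f^A_D(d) = \int f_{D|W}(d|w) dP_W(w) *)
Definition avg_posterior (dW : measure_display) (W : measurableType dW)
  (R : realType) (S : Type) (PW : probability W R) (post : S -> W -> R) :
  S -> R :=
  fun d => fine (\int[PW]_w (post d w)%:E)%E.

(* Main.v *)
Require Import Defs.
From HB Require Import structures.
From mathcomp Require Import all_boot all_order all_algebra.
From mathcomp Require Import all_classical all_reals all_analysis.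
From mathcomp Require Import measurable_realfun lra.
Import Order.TTheory GRing.Theory Num.Theory.
Import numFieldNormedType.Exports.
Local Open Scope classical_set_scope.
Local Open Scope ring_scope.


Section RealLemmas.
Variable R : realType.

Lemma ln_diff_bound (a A B : R) : 0 <= a -> 0 < A -> 0 < B ->
  A <= expR a * B -> B <= expR a * A ->
  `|ln A - ln ((A + B) / 2)| <= a.
Proof.
move=> a0 A0 B0 hA hB.
have k1 : 1 <= expR a by rewrite -expR0 ler_expR.
have m0 : 0 < (A + B) / 2 by lra.
have kp := expR_gt0 a.
have h1 : A <= expR a * ((A + B) / 2) by nra.
have h2 : (A + B) / 2 <= expR a * A by nra.
have e1 : ln (expR a * ((A + B) / 2)) = a + ln ((A + B) / 2).
  by rewrite lnM ?posrE // expRK.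
have e2 : ln (expR a * A) = a + ln A.
  by rewrite lnM ?posrE // expRK.
have l1 : ln A <= ln (expR a * ((A + B) / 2)).
  by rewrite ler_ln ?posrE //; nra.
have l2 : ln ((A + B) / 2) <= ln (expR a * A).
  by rewrite ler_ln ?posrE //; nra.
rewrite ler_norml; apply/andP; split; lra.
Qed.

Lemma sum_bound (a A B : R) : 0 <= a -> 0 < A -> 0 < B ->
  A <= expR a * B -> B <= expR a * A ->
  A * (ln A - ln ((A + B) / 2)) + B * (ln B - ln ((A + B) / 2))
    <= a * (expR a - 1) * B.
Proof.
move=> a0 A0 B0.
have [k kE] : {k | k = expR a} by exists (expR a).
rewrite -kE => hA hB.
have k1 : 1 <= k by rewrite kE -expR0 ler_expR.
have kp : 0 < k by rewrite kE expR_gt0.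
set m := (A + B) / 2.
have m0 : 0 < m by rewrite /m; lra.
have H : k - 1 <= a * k.
  have := expR_ge1Dx (- a); rewrite expRN -kE => h.
  have : 1 - a <= k^-1 by lra.
  have kk : k * k^-1 = 1 by rewrite mulfV // gt_eqF.
  nra.
have core : (A - B) ^+ 2 <= (A + B) * (a * (k - 1) * B).
  have [AB|BA] := lerP B A.
    have d1 : A - B <= (k - 1) * B by nra.
    have d2 : A - B <= a * A by nra.
    have p1 : (A - B) * (A - B) <= ((k - 1) * B) * (a * A).
      by apply: ler_pM => //; lra.
    have p2 : 0 <= a * (k - 1) * B * B.
      apply: mulr_ge0; last lra.
      apply: mulr_ge0; last lra.
      apply: mulr_ge0; lra.
    rewrite expr2; nra.
  have d2 : B - A <= a * B by nra.
  have kk : k * k^-1 = 1 by rewrite mulfV // gt_eqF.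
  have ki0 : 0 < k^-1 by rewrite invr_gt0.
  have e1 : B * k^-1 <= A.
    have := ler_wpM2r (ltW ki0) hB; rewrite -mulrA mulrCA kk mulr1 mulrC //.
  have e2 : 2 - k <= k^-1 by nra.
  have d1 : B - A <= (k - 1) * B by nra.
  have p1 : (B - A) * (B - A) <= ((k - 1) * B) * (a * B).
    by apply: ler_pM => //; lra.
  have p2 : 0 <= a * (k - 1) * B * A.
    apply: mulr_ge0; last lra.
      apply: mulr_ge0; last lra.
      apply: mulr_ge0; lra.
  rewrite expr2; nra.
have lnle : forall X, 0 < X -> ln X - ln m <= X / m - 1.
  move=> X X0.
  have e : ln X = ln m + ln (X / m).
    rewrite -lnM ?posrE ?divr_gt0 //; try lra.
    by rewrite mulrC divfK // gt_eqF.
  have := @le_ln1Dx R (X / m - 1).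
  rewrite addrCA subrr addr0 => h.
  have : -1 < X / m - 1 by have := divr_gt0 X0 m0; lra.
  move/h; lra.
have hA' := lnle A A0; have hB' := lnle B B0.
have step : A * (ln A - ln m) + B * (ln B - ln m) <= A * (A / m - 1) + B * (B / m - 1) by nra.
apply: (le_trans step).
have t : m * m^-1 = 1 by rewrite mulfV // gt_eqF.
have t0 : 0 < m^-1 by rewrite invr_gt0.
rewrite /m in t t0 core *.
nra.
Qed.
End RealLemmas.

Theorem theorem1 (dS dW : measure_display) (S : measurableType dS)
  (W : measurableType dW) (R : realType)
  (mu : {measure set S -> \bar R}) (PW : probability W R)
  (fD fB : S -> R) (post : S -> W -> R) (eps epsm : R) :
  0 <= eps -> 0 <= epsm ->
  is_density mu fD -> is_density mu fB ->
  measurable_fun setT (fun p : S * W => post p.1 p.2) ->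
  (forall w, is_density mu (fun d => post d w)) ->
  (forall d, expR (- eps) <= fB d / fD d <= expR eps) ->
  (forall w d, expR (- epsm) <= post d w / fD d <= expR epsm) ->
  let fA := avg_posterior PW post in
  JS mu fA fB \is a fin_num /\
  ABP_leakage mu fA fB <=
    (Num.sqrt 2)^-1 * Num.sqrt ((epsm + eps) * (expR (epsm + eps) - 1)).
Proof.
move=> eps0 epsm0 [mD fD0 intD] [mB fB0 intB] mpost _ hB hP fA.
have fDpos : forall x, 0 < fD x.
  move=> x; have := hB x; have := fD0 x; rewrite le_eqVlt => /orP[/eqP <-|//].
  rewrite invr0 mulr0 => /andP[h _]; have := expR_gt0 (- eps); lra.
have fBb : forall x, expR (- eps) * fD x <= fB x <= expR eps * fD x.
  move=> x; have /andP[h1 h2] := hB x.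
  by rewrite -(ler_pdivlMr _ _ (fDpos x)) -(ler_pdivrMr _ _ (fDpos x)) h1 h2.
have pb : forall x w, expR (- epsm) * fD x <= post x w <= expR epsm * fD x.
  move=> x w; have /andP[h1 h2] := hP w x.
  by rewrite -(ler_pdivlMr _ _ (fDpos x)) -(ler_pdivrMr _ _ (fDpos x)) h1 h2.
have mpw : forall x, measurable_fun setT (fun w => post x w).
  by move=> x; exact: (measurable_fun_pair2 x mpost).
have intb : forall x, ((expR (- epsm) * fD x)%:E <= \int[PW]_w (post x w)%:E <=
                         (expR epsm * fD x)%:E)%E.
  move=> x; apply/andP; split.
    rewrite -[X in (X <= _)%E]mule1 -(probability_setT PW) -integral_cst //.
    apply: ge0_le_integral => //.
    - move=> w _; rewrite lee_fin; apply: mulr_ge0; [exact: ltW (expR_gt0 _)| exact: fD0].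
    - exact/measurable_EFinP.
    - by move=> w _; rewrite lee_fin; have /andP[] := pb x w.
  rewrite -[X in (_ <= X)%E]mule1 -(probability_setT PW) -integral_cst //.
  apply: ge0_le_integral => //.
  - move=> w _; rewrite lee_fin; have /andP[h _] := pb x w.
    apply: le_trans h; apply: mulr_ge0; [exact: ltW (expR_gt0 _)| exact: fD0].
  - exact/measurable_EFinP.
  - by move=> w _; rewrite lee_fin; have /andP[] := pb x w.
have fAE : forall x, (fA x)%:E = (\int[PW]_w (post x w)%:E)%E.
  move=> x; rewrite /fA /avg_posterior fineK //.
  have /andP[h1 h2] := intb x.
  rewrite ge0_fin_numE; last first.
    apply: le_trans h1; rewrite lee_fin; apply: mulr_ge0; [exact: ltW (expR_gt0 _)| exact: fD0].
  exact: (le_lt_trans h2 (ltry _)).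
have fAb : forall x, expR (- epsm) * fD x <= fA x <= expR epsm * fD x.
  by move=> x; rewrite -!lee_fin fAE intb.
have post0 : forall p : S * W, (0 <= (post p.1 p.2)%:E)%E.
  move=> [x w]; rewrite lee_fin /=; have /andP[h _] := pb x w.
  apply: le_trans h; apply: mulr_ge0; [exact: ltW (expR_gt0 _)| exact: fD0].
have mfA : measurable_fun setT fA.
  have mF := @measurable_fun_fubini_tonelli_F _ _ _ _ _ PW
    (fun p : S * W => (post p.1 p.2)%:E) ((measurable_EFinP _ _).2 mpost) post0.
  exact: (measurableT_comp (fine_measurable measurableT) mF).
set a := epsm + eps.
have a0 : 0 <= a by rewrite /a; lra.
have [km kmE] : {k | k = expR epsm} by exists (expR epsm).
have [ke keE] : {k | k = expR eps} by exists (expR eps).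
have [km' km'E] : {k | k = expR (- epsm)} by exists (expR (- epsm)).
have [ke' ke'E] : {k | k = expR (- eps)} by exists (expR (- eps)).
have kmm : km * km' = 1 by rewrite kmE km'E -expRD subrr expR0.
have kee : ke * ke' = 1 by rewrite keE ke'E -expRD subrr expR0.
have eaE : expR a = km * ke by rewrite /a expRD kmE keE.
have km1 : 1 <= km by rewrite kmE -expR0 ler_expR.
have ke1 : 1 <= ke by rewrite keE -expR0 ler_expR.
have km'0 : 0 < km' by rewrite km'E expR_gt0.
have ke'0 : 0 < ke' by rewrite ke'E expR_gt0.
rewrite -km'E -kmE in pb fAb; rewrite -ke'E -keE in fBb.
have fApos : forall x, 0 < fA x.
  move=> x; have /andP[h _] := fAb x; have := fDpos x; nra.
have fBpos : forall x, 0 < fB x.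
  move=> x; have /andP[h _] := fBb x; have := fDpos x; nra.
have r1 : forall x, fA x <= expR a * fB x.
  move=> x; have /andP[_ h1] := fAb x; have /andP[h2 _] := fBb x.
  have := fDpos x; rewrite eaE.
  have : fD x <= ke * fB x.
    have := ler_wpM2l (le_trans ler01 ke1) h2; rewrite mulrA kee mul1r //.
  move=> h3 _; apply: (le_trans h1); rewrite -mulrA; apply: ler_wpM2l => //.
  exact: le_trans ler01 km1.
have r2 : forall x, fB x <= expR a * fA x.
  move=> x; have /andP[h1 _] := fAb x; have /andP[_ h2] := fBb x.
  have := fDpos x; rewrite eaE.
  have : fD x <= km * fA x.
    have := ler_wpM2l (le_trans ler01 km1) h1; rewrite mulrA kmm mul1r //.
  move=> h3 _; apply: (le_trans h2); rewrite [km * ke]mulrC -mulrA; apply: ler_wpM2l => //.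
  exact: le_trans ler01 ke1.
have ea0 : 0 < expR a := expR_gt0 a.
have ifD : mu.-integrable setT (fun x => (fD x)%:E).
  apply/integrableP; split; first exact/measurable_EFinP.
  under eq_integral => x _ do rewrite gee0_abs ?lee_fin //.
  by rewrite intD ltry.
have ifB : mu.-integrable setT (fun x => (fB x)%:E).
  apply/integrableP; split; first exact/measurable_EFinP.
  under eq_integral => x _ do rewrite gee0_abs ?lee_fin //.
  by rewrite intB ltry.
have iZ : forall (K : R) (f : S -> R), mu.-integrable setT (fun x => (f x)%:E) ->
    mu.-integrable setT (fun x => (K * f x)%:E).
  move=> K f hf.
  rewrite (_ : (fun x => (K * f x)%:E) = (fun x => K%:E * (f x)%:E))%E; last first.
    by apply/funext => x; rewrite EFinM.
  exact: integrableZl.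
have dA : forall x, fA x <= expR a * fD x.
  move=> x; have /andP[_ h] := fAb x; apply: (le_trans h).
  rewrite eaE; apply: ler_wpM2r; first exact: ltW.
  by rewrite -{1}[km]mulr1 ler_wpM2l // (le_trans ler01 km1).
have dB : forall x, fB x <= expR a * fD x.
  move=> x; have /andP[_ h] := fBb x; apply: (le_trans h).
  rewrite eaE; apply: ler_wpM2r; first exact: ltW.
  by rewrite -{1}[ke]mul1r ler_wpM2r // (le_trans ler01 ke1).
pose mm := fun x => (fA x + fB x) / 2.
have mmpos : forall x, 0 < mm x.
  by move=> x; rewrite /mm; have := fApos x; have := fBpos x; lra.
have mmm : measurable_fun setT mm.
  by apply: measurable_funM => //; apply: measurable_funD.
have lnE : forall X x, 0 < X -> ln (X / mm x) = ln X - ln (mm x).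
  move=> X x X0; rewrite lnM ?posrE ?invr_gt0 //; by rewrite lnV ?posrE.
pose gA := fun x => (fA x * (ln (fA x) - ln (mm x)))%:E.
pose gB := fun x => (fB x * (ln (fB x) - ln (mm x)))%:E.
have KLA : KL mu fA mm = (\int[mu]_x gA x)%E.
  by rewrite /KL; apply: eq_integral => x _; rewrite /gA lnE.
have KLB : KL mu fB mm = (\int[mu]_x gB x)%E.
  by rewrite /KL; apply: eq_integral => x _; rewrite /gB lnE.
have JSE : JS mu fA fB = ((2^-1)%:E * (KL mu fA mm + KL mu fB mm))%E by [].
have iA : mu.-integrable setT gA.
  apply: (le_integrable measurableT _ _ (iZ (a * expR a) _ ifD)).
    apply/measurable_EFinP; apply: measurable_funM => //.
    by apply: measurable_funB; apply: measurableT_comp => //; exact: measurable_ln.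
  move=> x _; rewrite /gA !abse_EFin lee_fin normrM (gtr0_norm (fApos x)).
  rewrite [`|a * expR a * fD x|]ger0_norm; last by apply: mulr_ge0 => //; apply: mulr_ge0 => //; apply: ltW.
  have h := @ln_diff_bound R a (fA x) (fB x) a0 (fApos x) (fBpos x) (r1 x) (r2 x).
  rewrite mulrC -mulrA; apply: ler_pM => //; first exact: ltW (fApos x).
have iB : mu.-integrable setT gB.
  apply: (le_integrable measurableT _ _ (iZ (a * expR a) _ ifD)).
    apply/measurable_EFinP; apply: measurable_funM => //.
    by apply: measurable_funB; apply: measurableT_comp => //; exact: measurable_ln.
  move=> x _; rewrite /gB !abse_EFin lee_fin normrM (gtr0_norm (fBpos x)).
  rewrite [`|a * expR a * fD x|]ger0_norm; last by apply: mulr_ge0 => //; apply: mulr_ge0 => //; apply: ltW.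
  have h : `|ln (fB x) - ln (mm x)| <= a.
    have := @ln_diff_bound R a (fB x) (fA x) a0 (fBpos x) (fApos x) (r2 x) (r1 x).
    by rewrite /mm [fA x + _]addrC.
  rewrite mulrC -mulrA; apply: ler_pM => //; exact: ltW (fBpos x).
set c := a * (expR a - 1).
have c0 : 0 <= c.
  rewrite /c; apply: mulr_ge0 => //; rewrite subr_ge0 -expR0 ler_expR //.
have Sle : (KL mu fA mm + KL mu fB mm <= c%:E)%E.
  rewrite KLA KLB -integralD //.
  have -> : c%:E = (\int[mu]_x (c * fB x)%:E)%E.
    under eq_integral => x _ do rewrite EFinM.
    by rewrite integralZl // intB mule1.
  apply: le_integral => //; [exact: integrableD | exact: iZ | ].
  move=> x _; rewrite /gA /gB -EFinD lee_fin.
  exact: (@sum_bound R a (fA x) (fB x) a0 (fApos x) (fBpos x) (r1 x) (r2 x)).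
have Sfin : (KL mu fA mm + KL mu fB mm)%E \is a fin_num.
  by rewrite fin_numD KLA KLB !integrable_fin_num.
split.
  by rewrite JSE fin_numM.
rewrite /ABP_leakage JSE -(fineK Sfin) -EFinM /=.
have Sle' : fine (KL mu fA mm + KL mu fB mm) <= c by rewrite -lee_fin fineK.
rewrite -sqrtrV // -sqrtrM; last by rewrite invr_ge0.
rewrite ler_sqrt; last by rewrite mulr_ge0 // invr_ge0.
by rewrite ler_wpM2l // invr_ge0.
Qed.
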